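(* Let $g\ge1$, $n=g+1$, $k\in\{1,\dots,g\}$, $I_k=\{1,\dots,k\}$, $\kappa_1,\dots,\kappa_n\in\mathbb C$ pairwise distinct, $\beta_1,\dots,\beta_g,\lambda_1,\dots,\lambda_g\in\mathbb C^*$, $\beta_0=\lambda_0=1$. Let $A$ be the $k\times n$ matrix with $A_{ij}=\delta_{ij}$ for $j\le k$ and $A_{ij}=\frac{\beta_{i-1}}{\beta_{j-1}(\kappa_j-\kappa_i)^2}\prod_{l\in I_k,l\ne i}\frac{\kappa_i-\kappa_l}{\kappa_j-\kappa_l}$ for $i\le k<j$, and let $\tilde A=V\cdot\mathrm{diag}(1,\lambda_1,\dots,\lambda_g)$ with $V_{ij}=\kappa_j^{i-1}$. Then $A$ and $\tilde A$ have the same row space (represent the same point of $\mathrm{Gr}(k,n)$) if and only if for all $j\in[g]$ $$\beta_j=\lambda_j^{-1}\,\exp\Big[\tfrac k2R_{jj}-\sum_{l=1}^{k-1}R_{jl}\Big].$$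
   Context: $R$ is the $g\times g$ symmetric matrix with $R_{ii}=-2\log(\kappa_{i+1}-\kappa_1)^2$ and $R_{ij}=\log\frac{(\kappa_{i+1}-\kappa_{j+1})^2}{(\kappa_{i+1}-\kappa_1)^2(\kappa_{j+1}-\kappa_1)^2}$ for $i\ne j$ (the limit period matrix of the degenerating hyperelliptic curves $y^2=\prod_i(x-\kappa_i-\varepsilon)(x-\kappa_i+\varepsilon)$); the right-hand side is independent of the branch of $\log$, e.g. $\exp[\tfrac12R_{jj}]=(\kappa_{j+1}-\kappa_1)^{-2}$. *)

(* Defs.v *)
(* complex numbers C = R[i] over R : realType
   (any realType is a complete archimedean ordered field, i.e. the reals). *)
From HB Require Import structures.
From mathcomp Require Import all_boot all_order all_algebra.
From mathcomp Require Import reals complex.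
Set Implicit Arguments. Unset Strict Implicit. Unset Printing Implicit Defensive.
Import Order.TTheory GRing.Theory Num.Theory.
Local Open Scope ring_scope.

(* Indexing convention: everything is 0-based.
   paper kappa_j (j = 1..n, n = g+1)      ~ kappa (j-1)   with kappa : 'I_(g.+1) -> C
   paper beta_j, lambda_j (j = 0..g)      ~ beta j, lambda j  (beta 0 = lambda 0 = 1)
   paper row i (1..k), column j (1..n)    ~ i-1 : 'I_k, j-1 : 'I_(g.+1)
   paper R_{jl} (j,l = 1..g, involving kappa_{j+1}, kappa_{l+1}, kappa_1)
                                          ~ indices j, l : 'I_(g.+1) with j, l <> 0,
                                            involving kappa j, kappa l, kappa 0. *)

Section Defs.
Variables (R : realType) (g k : nat).
Local Notation C := (R[i]).
Variables (kappa beta lambda : 'I_g.+1 -> C).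

(* The k x n matrix A (for i : 'I_k, the paper's index i-1 as an element of 'I_(g.+1)
   is inord i, which has value i since k <= g). *)
Definition matA : 'M[C]_(k, g.+1) :=
  \matrix_(i < k, j < g.+1)
    if (j < k)%N then (i == j :> nat)%:R
    else beta (inord i) / (beta j * (kappa j - kappa (inord i)) ^+ 2) *
         \prod_(l < g.+1 | (l < k)%N && (l != i :> nat))
            ((kappa (inord i) - kappa l) / (kappa j - kappa l)).

Definition matV : 'M[C]_(k, g.+1) := \matrix_(i < k, j < g.+1) kappa j ^+ i.

Definition matAt : 'M[C]_(k, g.+1) := matV *m diag_mx (\row_(j < g.+1) lambda j).

(* exp[R_{jl}/2] on the diagonal: exp[R_jj / 2] = (kappa_{j+1} - kappa_1)^(-2). *)
Definition expR_half_diag (j : 'I_g.+1) : C := ((kappa j - kappa 0) ^+ 2)^-1.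

(* exp[R_{jl}] : branch-independent value of exp of the limit period matrix entry. *)
Definition expRmat (j l : 'I_g.+1) : C :=
  if j == l then ((kappa j - kappa 0) ^+ 2)^-2
  else (kappa j - kappa l) ^+ 2 /
       ((kappa j - kappa 0) ^+ 2 * (kappa l - kappa 0) ^+ 2).

(* exp[ (k/2) R_jj - sum_{l=1}^{k-1} R_jl ]
   = (exp[R_jj/2])^k * prod_{l=1}^{k-1} (exp[R_jl])^(-1). *)
Definition expRcomb (j : 'I_g.+1) : C :=
  expR_half_diag j ^+ k *
  \prod_(l < g.+1 | (0 < l < k)%N) (expRmat j l)^-1.
End Defs.

(* Main.v *)
Require Import Defs.
From HB Require Import structures.
From mathcomp Require Import all_boot all_order all_algebra.
From mathcomp Require Import reals complex.
From mathcomp Require Import ring.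
Import Order.TTheory GRing.Theory Num.Theory.
Local Open Scope ring_scope.

Section Work.
Variables (R : realType) (g k : nat).
Local Notation C := (R[i]).
Variables (kappa beta lambda : 'I_g.+1 -> C).
Hypotheses (hk1 : (1 <= k)%N) (hkg : (k <= g)%N) (hkappa : injective kappa).
Hypotheses (hbeta : forall j, beta j != 0) (hlambda : forall j, lambda j != 0).

Let hkn : (k <= g.+1)%N := leqW hkg.
Let w := widen_ord hkn.
Let kk (a : 'I_k) := kappa (w a).
Definition Pp (a : 'I_k) (y : C) := \prod_(l < k | l != a) (y - kk l).

Lemma w_inj : injective w.
Proof. by move=> a b /(congr1 val) /= /val_inj. Qed.

Lemma kk_neq (a b : 'I_k) : a != b -> kk a - kk b != 0.
Proof.
move=> ab; rewrite subr_eq0; apply/eqP => /hkappa /w_inj /eqP; exact/negP.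
Qed.

Lemma Pp_neq0 a : Pp a (kk a) != 0.
Proof. apply/prodf_neq0 => l la; apply: kk_neq; by rewrite eq_sym. Qed.

Lemma inord_w (i : 'I_k) : inord i = w i :> 'I_g.+1.
Proof. by apply: val_inj; rewrite /= inordK // (leq_trans (ltn_ord i)). Qed.

Lemma A_left (i a : 'I_k) : matA k kappa beta i (w a) = (i == a)%:R.
Proof. by rewrite mxE /= ltn_ord. Qed.

Lemma A_col (i : 'I_k) (j : 'I_g.+1) : ~~ (j < k)%N ->
  matA k kappa beta i j =
  beta (w i) / (beta j * (kappa j - kk i) ^+ 2) * (Pp i (kk i) / Pp i (kappa j)).
Proof.
move=> hj; rewrite mxE (negbTE hj) inord_w; congr (_ * _).
rewrite /Pp -prodf_div.
rewrite (eq_bigl (fun l : 'I_g.+1 => (l != i :> nat) && (l < k)%N)); last first.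
  by move=> l; rewrite andbC.
rewrite (big_ord_narrow_cond (P := fun l : 'I_g.+1 => (l != i :> nat)) hkn).
by apply: eq_bigl.
Qed.

Definition Mm : 'M[C]_k := \matrix_(i < k, a < k) (lambda (w a) * kk a ^+ i).

Lemma M_entry i a : Mm i a = lambda (w a) * kk a ^+ i.
Proof. by rewrite mxE. Qed.

Lemma Vk_unit : Vandermonde k (\row_a kk a) \in unitmx.
Proof.
rewrite unitmxE det_Vandermonde unitfE; apply/prodf_neq0 => a _.
apply/prodf_neq0 => b ab; rewrite !mxE; apply: kk_neq.
by rewrite neq_ltn ab orbT.
Qed.

Lemma M_unit : Mm \in unitmx.
Proof.
have -> : Mm = Vandermonde k (\row_a kk a) *m diag_mx (\row_a lambda (w a)).
  by apply/matrixP => i a; rewrite mul_mx_diag !mxE mulrC.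
rewrite unitmx_mul Vk_unit unitmxE det_diag unitfE.
by apply/prodf_neq0 => a _; rewrite mxE.
Qed.

Lemma At_entry i j : matAt k kappa lambda i j = kappa j ^+ i * lambda j.
Proof. by rewrite /matAt mul_mx_diag !mxE. Qed.

Lemma L1 : (matA k kappa beta == matAt k kappa lambda)%MS =
  (matAt k kappa lambda == Mm *m matA k kappa beta).
Proof.
apply/idP/eqP.
  case/andP => _ /submxP [D hD].
  suff -> : Mm = D by [].
  apply/matrixP => i a.
  have := congr1 (fun X : 'M[C]_(k, g.+1) => X i (w a)) hD.
  rewrite At_entry !mxE (bigD1 a) //= A_left eqxx mulr1 big1 ?addr0.
    by move=> <-; rewrite mulrC.
  by move=> b hb; rewrite A_left (negbTE hb) mulr0.
move=> hE; apply/andP; split.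
  by rewrite hE -{1}(mulKmx M_unit (matA k kappa beta)) submxMl.
by rewrite hE submxMl.
Qed.

Lemma U (c : 'I_k -> C) (s x : C)
  (h : forall i : 'I_k, \sum_a kk a ^+ i * c a = s * x ^+ i) (b : 'I_k) :
  c b * Pp b (kk b) = s * Pp b x.
Proof.
pose p := \prod_(l < k | l != b) ('X - (kk l)%:P).
have hp y : p.[y] = Pp b y.
  by rewrite horner_prod; apply: eq_bigr => l _; rewrite hornerXsubC.
have sp : (size p <= k)%N.
  rewrite /p -big_filter size_prod_XsubC size_filter.
  have := cardC1 b; rewrite card_ord cardE /enum_mem size_filter.
  move=> ->; by rewrite prednK.
have key : \sum_a c a * p.[kk a] = s * p.[x].
  under eq_bigr do rewrite (horner_coef_wide _ sp).
  rewrite (horner_coef_wide _ sp) mulr_sumr.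
  under eq_bigr do rewrite mulr_sumr.
  rewrite exchange_big /=; apply: eq_bigr => i _.
  rewrite mulrCA -h mulr_sumr; apply: eq_bigr => a _.
  by rewrite mulrCA [_ * c a]mulrC.
rewrite (bigD1 b) //= big1 ?addr0 in key.
  by rewrite !hp in key.
by move=> a ab; rewrite hp /Pp (bigD1 a) //= subrr mul0r mulr0.
Qed.

Lemma L2 (c : 'I_k -> C) (s x : C) :
  (forall i : 'I_k, \sum_a kk a ^+ i * c a = s * x ^+ i) <->
  (forall a, c a * Pp a (kk a) = s * Pp a x).
Proof.
split; first exact: U.
move=> hc.
pose V := Vandermonde k (\row_a kk a).
pose cs := invmx V *m (\col_(i < k) (s * x ^+ i)).
have hV : V *m cs = \col_i (s * x ^+ i) by rewrite mulKVmx // Vk_unit.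
have hcs (i : 'I_k) : \sum_a kk a ^+ i * cs a 0 = s * x ^+ i.
  have := congr1 (fun X : 'M[C]_(k, 1) => X i 0) hV; rewrite !mxE => <-.
  by apply: eq_bigr => a _; rewrite !mxE.
have ec a : c a = cs a 0.
  by apply: (mulIf (Pp_neq0 a)); rewrite hc (U (fun a => cs a 0) _ _ hcs).
by move=> i; rewrite -(hcs i); apply: eq_bigr => a _; rewrite ec.
Qed.

Lemma L3 : (matAt k kappa lambda == Mm *m matA k kappa beta) =
  [forall j : 'I_g.+1, ~~ (j < k)%N ==> [forall a : 'I_k,
    lambda (w a) * matA k kappa beta a j * Pp a (kk a) == lambda j * Pp a (kappa j)]].
Proof.
apply/eqP/forallP.
  move=> hE j; apply/implyP => hj; apply/forallP => a; apply/eqP.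
  apply: (U (fun a => lambda (w a) * matA k kappa beta a j)) => i.
  rewrite mulrC -At_entry hE mxE; apply: eq_bigr => b _.
  by rewrite M_entry mulrCA mulrA.
move=> hc; apply/matrixP => i j; rewrite At_entry mxE.
case: (ltnP j k) => hj.
  have -> : j = w (Ordinal hj) by apply: val_inj.
  rewrite (bigD1 (Ordinal hj)) //= big1 ?addr0.
    by rewrite A_left eqxx mulr1 M_entry mulrC.
  by move=> b hb; rewrite A_left (negbTE hb) mulr0.
rewrite mulrC.
have := hc j; rewrite -leqNgt hj /= => /forallP hc'.
have := (proj2 (L2 (fun a => lambda (w a) * matA k kappa beta a j) (lambda j) (kappa j))).
move=> /(_ (fun a => eqP (hc' a))) /(_ i) <-.
apply: eq_bigr => b _.
by rewrite M_entry mulrCA mulrA.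
Qed.

Definition Ff (j : 'I_g.+1) := \prod_(l < k | w l != j) (kappa j - kk l) ^+ 2.
Definition ee (j : 'I_g.+1) := lambda j * beta j * Ff j.

Lemma Ff_w a : Ff (w a) = Pp a (kk a) ^+ 2.
Proof.
rewrite /Ff /Pp -prodrXl; apply: eq_bigl => l.
by rewrite (inj_eq w_inj).
Qed.

Lemma Ff_col (a : 'I_k) (j : 'I_g.+1) : ~~ (j < k)%N -> Ff j = (kappa j - kk a) ^+ 2 * Pp a (kappa j) ^+ 2.
Proof.
move=> hj; rewrite /Ff /Pp -prodrXl.
rewrite [LHS](eq_bigl xpredT); last first.
  move=> l /=; apply/eqP => /(congr1 val) /= hl.
  by move: hj; rewrite -hl ltn_ord.
by rewrite (bigD1 a).
Qed.

Lemma Pp_col_neq0 (a : 'I_k) (j : 'I_g.+1) : ~~ (j < k)%N -> Pp a (kappa j) != 0.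
Proof.
move=> hj; apply/prodf_neq0 => l _; rewrite subr_eq0; apply/eqP => /hkappa.
by move/(congr1 val) => /= hl; move: hj; rewrite hl ltn_ord.
Qed.

Lemma D_equiv (a : 'I_k) (j : 'I_g.+1) : ~~ (j < k)%N ->
  (lambda (w a) * matA k kappa beta a j * Pp a (kk a) == lambda j * Pp a (kappa j))
  = (ee (w a) == ee j).
Proof.
move=> hj; rewrite A_col // /ee Ff_w (Ff_col a j hj).
have hq := Pp_col_neq0 a j hj.
have hp := Pp_neq0 a.
have hd : kappa j - kk a != 0.
  rewrite subr_eq0; apply/eqP => /hkappa /(congr1 val) /= hl.
  by move: hj; rewrite hl ltn_ord.
have hz : beta j * (kappa j - kk a) ^+ 2 * Pp a (kappa j) != 0.
  by rewrite !mulf_neq0 ?expf_neq0.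
rewrite -(inj_eq (mulIf hz)).
set p := Pp a (kk a); set q := Pp a (kappa j); set d := kappa j - kk a.
have hb := hbeta j.
apply/eqP/eqP => H.
  rewrite [RHS](_ : _ = lambda j * q * (beta j * d ^+ 2 * q)); last by ring.
  rewrite -H; field; by rewrite hb hd hq.
rewrite [LHS](_ : _ = lambda (w a) * beta (w a) * p ^+ 2); last first.
  by field; rewrite hb hd hq.
by rewrite H; ring.
Qed.

Lemma comb (e : 'I_g.+1 -> C) :
  [forall j : 'I_g.+1, ~~ (j < k)%N ==> [forall a : 'I_k, e (w a) == e j]] =
  [forall j : 'I_g.+1, (j != ord0) ==> (e j == e ord0)].
Proof.
have w0 : w (Ordinal hk1) = ord0 by apply: val_inj.
apply/forallP/forallP.
  move=> H j; apply/implyP => j0.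
  have Hg : ~~ (@ord_max g < k)%N by rewrite -leqNgt.
  case: (ltnP j k) => hj.
    have := H ord_max; rewrite Hg /= => /forallP H1.
    have -> : j = w (Ordinal hj) by apply: val_inj.
    by rewrite (eqP (H1 (Ordinal hj))) -(eqP (H1 (Ordinal hk1))) w0.
  have := H j; rewrite -leqNgt hj /= => /forallP H1.
  by rewrite -(eqP (H1 (Ordinal hk1))) w0.
move=> H j; apply/implyP => hj; apply/forallP => a.
have j0 : j != ord0.
  apply/eqP => j0; move: hj; rewrite j0 /= -leqNgt leqn0 => /eqP k0.
  by move: hk1; rewrite k0.
have ej : e j = e ord0 by have := H j; rewrite j0 => /eqP.
rewrite ej; case: (eqVneq (w a) ord0) => [->//|wa].
by have := H (w a); rewrite wa.
Qed.

Let a0 : 'I_k := Ordinal hk1.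
Lemma w_a0 : w a0 = ord0. Proof. exact: val_inj. Qed.

Lemma split0 (X : 'I_k -> C) : \prod_(l < k) X l = X a0 * \prod_(l < k | (0 < l)%N) X l.
Proof.
rewrite (bigD1 a0) //=; congr (_ * _); apply: eq_bigl => l.
by rewrite -val_eqE /= lt0n.
Qed.

Lemma kappa_neq (x y : 'I_g.+1) : x != y -> kappa x - kappa y != 0.
Proof. by move=> xy; rewrite subr_eq0 (inj_eq hkappa). Qed.

Lemma expRcomb_F (j : 'I_g.+1) : j != ord0 ->
  expRcomb k kappa j * Ff j = Ff ord0.
Proof.
move=> j0.
set dj2 := (kappa j - kappa ord0) ^+ 2.
have hdj : kappa j - kappa ord0 != 0 by apply: kappa_neq.
have hdj2 : dj2 != 0 by rewrite expf_neq0.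
pose t (l : 'I_k) := if w l != j then (kappa j - kk l) ^+ 2 else 1.
have Ft : Ff j = dj2 * \prod_(l < k | (0 < l)%N) t l.
  rewrite /Ff big_mkcond split0 /t w_a0 eq_sym j0 /kk w_a0.
  by congr (_ * _); apply: eq_bigr => l _.
have F0 : Ff ord0 = \prod_(l < k | (0 < l)%N) (kk l - kappa ord0) ^+ 2.
  rewrite /Ff; apply: eq_big => l.
    by rewrite -val_eqE /= lt0n.
  by move=> _; rewrite -sqrrN opprB.
have nar : \prod_(l < g.+1 | (0 < l < k)%N) (expRmat kappa j l)^-1 =
    \prod_(l < k | (0 < l)%N) (expRmat kappa j (w l))^-1.
  by rewrite (big_ord_narrow_cond (P := fun l : 'I_g.+1 => (0 < l)%N) hkn).
have st (l : 'I_k) : (0 < l)%N ->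
    (expRmat kappa j (w l))^-1 * t l = dj2 * (kk l - kappa ord0) ^+ 2.
  move=> hl; rewrite /expRmat /t.
  have wl0 : w l != ord0 by rewrite -val_eqE /= -lt0n.
  have hl0 : kk l - kappa ord0 != 0 by apply: kappa_neq.
  have k0 : kappa 0 = kappa ord0 by [].
  case: (eqVneq j (w l)) => h.
    by rewrite /= k0 invrK /dj2 /kk -h expr2 mulr1.
  have hjl : kappa j - kk l != 0 by apply: kappa_neq.
  rewrite /= k0 /dj2 /kk; rewrite /kk in hjl hl0; field.
  by rewrite hjl hdj hl0.
rewrite /expRcomb /expR_half_diag -/dj2 nar Ft F0.
have hET : \prod_(l < k | (0 < l)%N) (expRmat kappa j (w l))^-1 *
           \prod_(l < k | (0 < l)%N) t l =
           \prod_(l < k | (0 < l)%N) dj2 *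
           \prod_(l < k | (0 < l)%N) (kk l - kappa ord0) ^+ 2.
  by rewrite -!big_split; apply: eq_bigr => l hl; apply: st.
rewrite -mulrA [_ * (dj2 * _)]mulrCA hET 2!mulrA.
have -> : dj2^-1 ^+ k * dj2 * \prod_(l < k | (0 < l)%N) dj2 = 1.
  rewrite -mulrA -(split0 (fun=> dj2)) prodr_const card_ord exprVn mulVf //.
  by rewrite expf_neq0.
by rewrite mul1r.
Qed.

Hypotheses (hbeta0 : beta ord0 = 1) (hlambda0 : lambda ord0 = 1).

Lemma Ff_neq0 j : Ff j != 0.
Proof.
apply/prodf_neq0 => l hl; rewrite expf_neq0 // /kk; apply: kappa_neq.
by rewrite eq_sym.
Qed.

Lemma main : (matA k kappa beta == matAt k kappa lambda)%MS =
  [forall j : 'I_g.+1, (j != ord0) ==>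
     (beta j == (lambda j)^-1 * expRcomb k kappa j)].
Proof.
rewrite L1 L3.
transitivity [forall j : 'I_g.+1, ~~ (j < k)%N ==> [forall a : 'I_k, ee (w a) == ee j]].
  apply: eq_forallb => j; case hj: (j < k)%N => //=.
  apply: eq_forallb => a; apply: D_equiv; by rewrite hj.
rewrite comb; apply: eq_forallb => j; case: eqP => [->|/eqP j0] //=.
rewrite /ee hbeta0 hlambda0 !mul1r -(expRcomb_F j j0) (inj_eq (mulIf (Ff_neq0 j))).
have hl := hlambda j.
apply/eqP/eqP => H; first by rewrite -H mulKf.
by rewrite H mulVKf.
Qed.
End Work.

Theorem proposition5p7 (R : realType) (g k : nat)
  (kappa beta lambda : 'I_g.+1 -> R[i])
  (hg : (1 <= g)%N) (hk1 : (1 <= k)%N) (hkg : (k <= g)%N)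
  (hkappa : injective kappa)
  (hbeta0 : beta ord0 = 1) (hlambda0 : lambda ord0 = 1)
  (hbeta : forall j, beta j != 0) (hlambda : forall j, lambda j != 0) :
  (matA k kappa beta == matAt k kappa lambda)%MS =
  [forall j : 'I_g.+1, (j != ord0) ==>
     (beta j == (lambda j)^-1 * expRcomb k kappa j)].
Proof. by apply: main; auto. Qed.
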